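(* Let $\mathcal{G}$ be a graph on the vertex set $\{1,2,\ldots,d\}$, let $w(\mathcal{G})$ denote its treewidth, and let $\alpha$ be a real scalar. Suppose that: (i) $\mathcal{G}$ is chordal; (ii) $w(\mathcal{G})\leq \frac{2}{3}(d-1)$; (iii) $\alpha<\dfrac{1}{w(\mathcal{G})\sqrt{d-w(\mathcal{G})-1}+w(\mathcal{G})-1}$. Then $$\beta(\mathcal{G},\alpha)\leq\frac{w(\mathcal{G})\sqrt{d-w(\mathcal{G})-1}\;\alpha^2}{1-(w(\mathcal{G})-1)\,\alpha}.$$
   Context: A graph is chordal if it contains no induced cycle of length greater than three. For a chordal graph, $w(\mathcal{G})$ (treewidth) is the number of vertices of a largest clique of $\mathcal{G}$ minus one. For a symmetric matrix $M\in\mathbb{S}^d$, its support graph $\mathrm{supp}(M)$ is the graph on $\{1,\ldots,d\}$ with an edge $\{i,j\}$, $i\neq j$, iff $M_{ij}\neq 0$; $(\mathrm{supp}(M))^{(c)}$ denotes the complement graph. $\|M\|_{\max}=\max_{i\neq j}|M_{ij}|$ (maximum absolute off-diagonal entry). A matrix $M\in\mathbb{S}^d$ is called inverse-consistent if there exists $N\in\mathbb{S}^d$ with zero diagonal such that $M+N\succ 0$, $\mathrm{supp}(N)\subseteq(\mathrm{supp}(M))^{(c)}$, and $\mathrm{supp}((M+N)^{-1})\subseteq\mathrm{supp}(M)$; such $N$ is called an inverse-consistent complement of $M$ and denoted $M^{(c)}$ (every positive definite matrix has a unique inverse-consistent complement). Given a graph $\mathcal{G}$ and scalar $\alpha$,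 $\beta(\mathcal{G},\alpha)$ is defined as the maximum of $\|M^{(c)}\|_{\max}$ over all inverse-consistent positive definite matrices $M$ with all diagonal entries equal to $1$ such that $\mathrm{supp}(M)=\mathcal{G}$ and $\|M\|_{\max}\leq\alpha$. *)

(* Defs.v *)
From HB Require Import structures.
From mathcomp Require Import all_boot all_order all_algebra.
Set Implicit Arguments. Unset Strict Implicit. Unset Printing Implicit Defensive.
Import Order.TTheory GRing.Theory Num.Theory.
Local Open Scope ring_scope.

Definition simple_graph (d : nat) (G : rel 'I_d) : Prop :=
  (forall i, ~~ G i i) /\ (forall i j, G i j = G j i).

Definition cyc_adj (k : nat) (i j : 'I_k) : bool :=
  (j == (i.+1 %% k)%N :> nat) || (i == (j.+1 %% k)%N :> nat).

Definition chordal (d : nat) (G : rel 'I_d) : Prop :=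
  forall (k : nat) (c : 'I_k -> 'I_d),
    (4 <= k)%N -> injective c ->
    (forall i j : 'I_k, cyc_adj i j -> G (c i) (c j)) ->
    exists i j : 'I_k, [/\ i != j, ~~ cyc_adj i j & G (c i) (c j)].

Definition is_clique (d : nat) (G : rel 'I_d) (A : {set 'I_d}) : bool :=
  [forall x in A, forall y in A, (x != y) ==> G x y].

(* Treewidth of a chordal graph: size of a largest clique minus one. *)
Definition chordal_treewidth (d : nat) (G : rel 'I_d) : nat :=
  ((\max_(A : {set 'I_d} | is_clique G A) #|A|) - 1)%N.

Definition supp (R : ringType) (d : nat) (M : 'M[R]_d) : rel 'I_d :=
  fun i j => (i != j) && (M i j != 0).

Definition sym_mx (R : ringType) (d : nat) (M : 'M[R]_d) : Prop := M^T = M.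

Definition posdef (R : numFieldType) (d : nat) (M : 'M[R]_d) : Prop :=
  sym_mx M /\ forall x : 'cV[R]_d, x != 0 -> 0 < (x^T *m M *m x) 0 0.

Definition maxnorm (R : numDomainType) (d : nat) (M : 'M[R]_d) : R :=
  \big[Num.max/0]_(i : 'I_d) \big[Num.max/0]_(j : 'I_d | i != j) `|M i j|.

Definition inv_cons_complement (R : numFieldType) (d : nat) (M N : 'M[R]_d)
  : Prop :=
  [/\ sym_mx N, (forall i, N i i = 0), posdef (M + N),
      (forall i j, supp N i j -> ~~ supp M i j) &
      (forall i j, supp (invmx (M + N)) i j -> supp M i j)].

Definition inverse_consistent (R : numFieldType) (d : nat) (M : 'M[R]_d)
  : Prop := sym_mx M /\ exists N, inv_cons_complement M N.

(* Main.v *)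
Require Import Defs.
From HB Require Import structures.
From mathcomp Require Import all_boot all_order all_algebra.
From mathcomp Require Import zify ring lra.
Import Order.TTheory GRing.Theory Num.Theory.

Set Implicit Arguments. Unset Strict Implicit. Unset Printing Implicit Defensive.

Section Graph.
Variables (d : nat) (G : rel 'I_d).
Hypothesis Girr : forall i, ~~ G i i.
Hypothesis Gsym : forall i j, G i j = G j i.
Hypothesis Gch : chordal G.

Definition walk (W : {set 'I_d}) x y n (f : nat -> 'I_d) :=
  [/\ f 0 = x, f n = y, (forall i, i < n -> G (f i) (f i.+1))
    & (forall i, 0 < i < n -> f i \in W)].

Lemma walk_chord W x y n f i j : walk W x y n f -> i.+1 < j <= n ->
  G (f i) (f j) -> walk W x y (n - (j - i.+1)) (fun t => if t <= i then f t else f (t + (j - i.+1))).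
Proof.
move=> [f0 fn fe fw] hij hG; split.
- by rewrite leq0n.
- have -> : (n - (j - i.+1) <= i) = false by apply/negbTE; rewrite -ltnNge; lia.
  by have -> : n - (j - i.+1) + (j - i.+1) = n by lia.
- move=> t ht; case: ifP => h1; case: ifP => h2.
  + apply: fe; lia.
  + have ti : t = i by lia.
    by subst t; have -> : i.+1 + (j - i.+1) = j by lia.
  + lia.
  + have -> : t.+1 + (j - i.+1) = (t + (j - i.+1)).+1 by lia.
    apply: fe; lia.
- move=> t ht; case: ifP => h; apply: fw; lia.
Qed.

Lemma walk_trunc W x y n f i : walk W x y n f -> i < n -> f i = y -> walk W x y i f.
Proof.
move=> [f0 fn fe fw] hi hy; split => // t ht; [apply: fe|apply: fw]; lia.
Qed.

Lemma no_walk (W : {set 'I_d}) a x y : G a x -> G a y -> x != y -> ~~ G x y ->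
  (forall z, z \in W -> (z != a) && ~~ G a z) ->
  forall n f, walk W x y n f -> False.
Proof.
move=> Gax Gay nxy nGxy HW n.
elim: n {-2}n (leqnn n) => [|N IH] n hn f hw.
  have n0 : n = 0 by lia.
  subst n; case: hw => f0 fn _ _; by rewrite -f0 fn eqxx in nxy.
case hsc: [exists i : 'I_n.+1, exists j : 'I_n.+1,
   (i.+1 < j) && ((f i == f j) || G (f i) (f j))].
  move/existsP: hsc => [i /existsP [j /andP [hij /orP [/eqP he | hG]]]].
  - have jn : j <= n by have := ltn_ord j; lia.
    case: (ltngtP j n) => hjn.
    + have hG : G (f i) (f j.+1) by rewrite he; case: hw => _ _ fe _; apply: fe.
      have hw' := @walk_chord W x y n f i j.+1 hw ltac:(lia) hG.
      apply: (IH _ _ _ hw'); lia.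
    + lia.
    + apply: (IH i); first lia.
      apply: (walk_trunc hw); first lia.
      by rewrite he hjn; case: hw.
  - have jn : j <= n by have := ltn_ord j; lia.
    have hw' := @walk_chord W x y n f i j hw ltac:(lia) hG.
    apply: (IH _ _ _ hw'); lia.
move/negbT: hsc; rewrite negb_exists => /forallP hsc.
have nosc : forall i j, i.+1 < j <= n -> (f i != f j) && ~~ G (f i) (f j).
  move=> i j hij.
  have hi : i < n.+1 by lia.
  have hj : j < n.+1 by lia.
  have := hsc (Ordinal hi).
  rewrite negb_exists => /forallP /(_ (Ordinal hj)) /=.
  by move/andP: hij => [-> _] /=; rewrite negb_or.
case: hw => f0 fn fe fw.
have n2 : 1 < n.
  clear hsc; case: n hn f0 fn fe fw nosc => [|[|n]] // _ f0 fn fe _ _.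
  - by rewrite -f0 fn eqxx in nxy.
  - by have := fe 0 isT; rewrite f0 fn (negbTE nGxy).
have finj : forall i j, i <= n -> j <= n -> f i = f j -> i = j.
  move=> i j hi hj he; case: (ltngtP i j) => // h.
  - case: (ltngtP i.+1 j) => h2.
    + by have := nosc i j; rewrite he eqxx; move=> /(_ ltac:(lia)).
    + lia.
    + by subst j; have := fe i ltac:(lia); rewrite he (negbTE (Girr _)).
  - case: (ltngtP j.+1 i) => h2.
    + by have := nosc j i; rewrite he eqxx; move=> /(_ ltac:(lia)).
    + lia.
    + by subst i; have := fe j ltac:(lia); rewrite he (negbTE (Girr _)).
pose k := n.+2.
pose c := fun t : 'I_k => if val t == 0 then a else f (val t).-1.
have Wa : forall z, z \in W -> z != a by move=> z /HW /andP [].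
have WG : forall z, z \in W -> ~~ G a z by move=> z /HW /andP [].
have fa : forall t, t <= n -> f t != a.
  move=> t ht; case: (posnP t) => [->|t0]; first by rewrite f0; apply: contraTneq Gax => ->; rewrite Girr.
  case: (ltngtP t n) => h; first by apply: Wa; apply: fw; lia.
    lia.
  by rewrite h fn; apply: contraTneq Gay => ->; rewrite Girr.
have cinj : injective c.
  move=> [s hs] [t ht]; rewrite /c /= => he; apply/val_inj => /=; rewrite /k in hs ht.
  case: (eqVneq s 0) he => s0; case: (eqVneq t 0) => t0 he.
  - by rewrite s0 t0.
  - by have := fa t.-1 ltac:(lia); rewrite he eqxx.
  - by have := fa s.-1 ltac:(lia); rewrite he eqxx.
  - have := finj s.-1 t.-1 ltac:(lia) ltac:(lia) he; lia.
have cadj : forall s t : 'I_k, cyc_adj s t -> G (c s) (c t).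
  have one : forall s t : 'I_k, val t = (s.+1 %% k)%N -> G (c s) (c t).
    move=> [s hs] [t ht] /= ht'; rewrite /c /= ht'.
    case: (ltngtP s.+1 k) => h.
    - rewrite modn_small //=.
      case: (eqVneq s 0) => s0; first by rewrite s0 /= f0.
      have -> : s = (s.-1).+1 by lia.
      by rewrite /= fe //; lia.
    - lia.
    - rewrite h modnn /=; have -> : s.-1 = n by rewrite /k in h; lia.
      have -> : (s == 0) = false by apply/negbTE; rewrite /k in h; lia.
      by rewrite fn Gsym.
  move=> s t /orP [/eqP h | /eqP h]; first exact: one.
  by rewrite Gsym; apply: one.
have k4 : 3 < k by rewrite /k; lia.
have [s [t [hst hna hG]]] := Gch (c := c) k4 cinj cadj.
move: hst hna hG; case: s => s hs; case: t => t ht.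
rewrite /cyc_adj /c /= => hst hna hG.
have hna' : (t != (s.+1 %% k)%N) && (s != (t.+1 %% k)%N) by rewrite -negb_or.
move/andP: hna' => [h1 h2].
have mod1 : forall u, u < k -> (u.+1 %% k)%N = if u.+1 == k then 0 else u.+1.
  move=> u hu; case: eqP => h; first by rewrite h modnn.
  by rewrite modn_small //; lia.
rewrite !mod1 // in h1 h2.
have hst' : s != t by move: hst; apply: contra => /eqP e; apply/eqP/val_inj.
clear hst; rewrite /k in hs ht.
have h1n : t <> (if s.+1 == n.+2 then 0 else s.+1) by apply/eqP.
have h2n : s <> (if t.+1 == n.+2 then 0 else t.+1) by apply/eqP.
move: h1n h2n; case: eqP => e1; case: eqP => e2 h1n h2n.
all: case: (eqVneq s 0) hG => s0 hG; case: (eqVneq t 0) hG => t0 hG.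
all: try by [lia].
all: rewrite ?s0 ?t0 /= in hG.
all: try (by have := WG _ (fw t.-1 ltac:(lia)); rewrite hG).
all: try (by have := WG _ (fw s.-1 ltac:(lia)); rewrite Gsym hG).
all: case: (ltngtP s t) => hlt; try lia.
all: try (by have := nosc s.-1 t.-1 ltac:(lia); rewrite hG andbF).
all: try (by have := nosc t.-1 s.-1 ltac:(lia); rewrite Gsym hG andbF).
Qed.

Lemma walk_in (P : pred 'I_d) (e : rel 'I_d) n0 (f0 : nat -> 'I_d) :
  (forall x y, e x y -> P x && P y) -> P (f0 0) ->
  (forall t, t < n0 -> e (f0 t) (f0 t.+1)) -> forall t, t <= n0 -> P (f0 t).
Proof.
move=> he h0 hf; elim=> // t IHt ht.
by have /he /andP [_ ->] := hf t ht.
Qed.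

Definition ext_fun (x y : 'I_d) n0 (f0 : nat -> 'I_d) :=
  fun t => if t == 0 then x else if t <= n0.+1 then f0 t.-1 else y.

Lemma ext_walk (W : {set 'I_d}) x y dx dy n0 f0 :
  G x dx -> G dy y -> f0 0 = dx -> f0 n0 = dy ->
  (forall t, t < n0 -> G (f0 t) (f0 t.+1)) -> (forall t, t <= n0 -> f0 t \in W) ->
  walk W x y n0.+2 (ext_fun x y n0 f0).
Proof.
move=> Gx Gy f00 f0n fe fw; rewrite /ext_fun; split.
- by [].
- by rewrite /= ltnn.
- move=> t ht.
  case: (eqVneq t 0) => t0.
    by rewrite t0 /= f00.
  have -> : (t <= n0.+1) = true by lia.
  rewrite /=.
  case: (ltngtP t n0.+1) => h.
  + have := fe t.-1 ltac:(lia).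
    by have -> : t.-1.+1 = t by lia.
  + lia.
  + by rewrite h /= f0n.
- move=> t ht.
  have -> : (t == 0) = false by lia.
  have -> : (t <= n0.+1) = true by lia.
  apply: fw; lia.
Qed.

Definition simp (U : {set 'I_d}) v :=
  forall x y, x \in U -> y \in U -> G v x -> G v y -> x != y -> G x y.

Lemma walk_of_connect (e : rel 'I_d) u v : connect e u v ->
  exists n (f : nat -> 'I_d), [/\ f 0 = u, f n = v & forall t, t < n -> e (f t) (f t.+1)].
Proof.
move/connectP => [p hp ->]; exists (size p), (fun t => nth u (u :: p) t); split => //.
- by have := nth_last u (u :: p).
- by move=> t ht; move/(pathP u): hp => /(_ t ht).
Qed.

Lemma simplicial_exists n : forall (U : {set 'I_d}) a, #|U| <= n -> a \in U ->
  (exists b, [/\ b \in U, b != a & ~~ G a b]) ->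
  exists v, [/\ v \in U, v != a, ~~ G a v & simp U v].
Proof.
elim: n => [|n IH] U a hU aU [b [bU ba nGab]].
  by move: hU; rewrite leqn0 => /eqP /card0_eq /(_ a); rewrite aU.
pose W := [set z in U | (z != a) && ~~ G a z].
have bW : b \in W by rewrite inE bU ba nGab.
pose e' := [rel x y | [&& G x y, x \in W & y \in W]].
pose D := [set z in W | connect e' b z].
pose S := [set s in U | G a s && [exists z in D, G s z]].
pose U' := D :|: S.
have DW : forall z, z \in D -> z \in W by move=> z; rewrite inE => /andP [].
have WU : forall z, z \in W -> z \in U by move=> z; rewrite inE => /andP [].
have Dcl : forall z y, z \in D -> y \in W -> G z y -> y \in D.
  move=> z y zD yW Gzy; rewrite inE yW /=.
  move: zD; rewrite inE => /andP [zW cz].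
  by apply: connect_trans cz (connect1 _); rewrite /= Gzy zW yW.
have bD : b \in D by rewrite inE bW connect0.
have esym : connect_sym e'.
  apply: sym_connect_sym => x y /=; rewrite Gsym; case: (x \in W); case: (y \in W) => //=;
  by rewrite andbF.
have Sclq : forall x y, x \in S -> y \in S -> x != y -> G x y.
  move=> x y; rewrite !inE => /andP [xU /andP [Gax /existsP [dx /andP [dxD Gxdx]]]].
  move=> /andP [yU /andP [Gay /existsP [dy /andP [dyD Gydy]]]] nxy.
  apply/negPn/negP => nGxy.
  have cxy : connect e' dx dy.
    move: dxD dyD; rewrite !inE => /andP [_ c1] /andP [_ c2].
    by apply: connect_trans c2; rewrite esym.
  have [n0 [f0 [f00 f0n f0e]]] := walk_of_connect cxy.
  have f0W : forall t, t <= n0 -> f0 t \in W.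
    apply: (@walk_in (mem W) e' n0 f0) => //.
    - by move=> x0 y0 /and3P [_ h1 h2]; apply/andP.
    - by rewrite f00; apply: DW.
  apply: (@no_walk W a x y Gax Gay nxy nGxy _ n0.+2 (ext_fun x y n0 f0)).
    by move=> z; rewrite inE => /andP [_].
  apply: (@ext_walk W x y dx dy n0 f0) => //.
  all: try by rewrite Gsym.
  by move=> t /f0e /and3P [].
have U'U : forall z, z \in U' -> z \in U.
  by move=> z; rewrite inE => /orP [/DW/WU | ]; rewrite ?inE => // /andP [].
have aU' : a \notin U'.
  rewrite inE negb_or; apply/andP; split.
    by apply/negP => /DW; rewrite inE eqxx andbF.
  by rewrite inE (negbTE (Girr a)) andbF.
have cardU' : #|U'| <= n.
  have : U' \subset U :\ a.
    apply/subsetP => z zU; rewrite !inE U'U // andbT.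
    by apply: contraNneq aU' => <-.
  move/subset_leq_card; move: hU; rewrite (cardsD1 a U) aU; lia.
have nbr : forall v x, v \in D -> x \in U -> G v x -> x \in U'.
  move=> v x vD xU Gvx.
  have vW := DW _ vD; move: (vW); rewrite inE => /and3P [_ va nGav].
  have xa : x != a by apply: contraNneq nGav => <-; rewrite Gsym.
  case: (boolP (G a x)) => Gax.
    by rewrite inE; apply/orP; right; rewrite inE xU Gax /=; apply/existsP; exists v; rewrite vD Gsym.
  by rewrite inE (Dcl v x) // inE xU xa Gax.
have fin : forall v, v \in D -> simp U' v -> exists v, [/\ v \in U, v != a, ~~ G a v & simp U v].
  move=> v vD sv; have := DW _ vD; rewrite inE => /and3P [vU va nGav].
  exists v; split => // x y xU yU Gvx Gvy nxy.
  by apply: sv => //; apply: (nbr v).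
case: (pickP [pred p : 'I_d * 'I_d | [&& p.1 \in U', p.2 \in U', p.1 != p.2 & ~~ G p.1 p.2]]).
  move=> [x z] /and4P [/= xU zU xz nGxz].
  have w0 : exists b0, [/\ b0 \in U', b0 != x & ~~ G x b0] by exists z; rewrite zU eq_sym xz.
  have [v1 [v1U v1x nGxv1 sv1]] := IH U' x cardU' xU w0.
  move: (v1U); rewrite inE => /orP [v1D | v1S]; first exact: fin v1D sv1.
  have w : exists b0, [/\ b0 \in U', b0 != v1 & ~~ G v1 b0] by exists x; rewrite xU eq_sym v1x Gsym.
  have [v2 [v2U v2v1 nGv1v2 sv2]] := IH U' v1 cardU' v1U w.
  move: (v2U); rewrite inE => /orP [v2D | v2S]; first exact: fin v2D sv2.
  by have := Sclq v1 v2 v1S v2S; rewrite eq_sym v2v1 (negbTE nGv1v2) => /(_ isT).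
move=> hno; apply: (fin b bD) => x y xU yU _ _ nxy.
by have := hno (x, y); rewrite /= xU yU nxy /= => /negbT; rewrite negbK.
Qed.

End Graph.

Local Open Scope ring_scope.

Section Analytic.
Variables (R : rcfType) (d : nat) (G : rel 'I_d).
Hypothesis Girr : forall i, ~~ G i i.
Hypothesis Gsym : forall i j, G i j = G j i.
Variable (S : 'M[R]_d).
Hypothesis Ssym : forall i j, S i j = S j i.
Hypothesis Spd : forall x : 'cV[R]_d, x != 0 -> 0 < (x^T *m S *m x) 0 0.

Definition prec (U : {set 'I_d}) (K : 'M[R]_d) :=
  (forall i j, K i j != 0 -> [&& i \in U, j \in U & (i == j) || G i j]) /\
  (forall i j, i \in U -> j \in U -> (S *m K) i j = (i == j)%:R).

Lemma Kpos U K v : prec U K -> v \in U -> 0 < K v v.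
Proof.
move=> [hK hSK] vU.
pose x : 'cV[R]_d := \col_i K i v.
have SKcol : forall i, (S *m x) i 0 = (S *m K) i v.
  by move=> i; rewrite !mxE; apply: eq_bigr => j _; rewrite mxE.
have hx : (x^T *m S *m x) 0 0 = K v v.
  rewrite -mulmxA mxE (bigD1 v) //= big1 ?addr0.
  - by rewrite SKcol hSK // eqxx (_ : x^T 0 v = K v v) ?mulr1 // !mxE.
  - move=> i iv; rewrite SKcol (_ : x^T 0 i = K i v); last by rewrite !mxE.
    case: (eqVneq (K i v) 0) => [->|hn]; first by rewrite mul0r.
    by have /and3P [iU _ _] := hK _ _ hn; rewrite hSK // (negbTE iv) mulr0.
have x0 : x != 0.
  apply/eqP => x0; have := hSK v v vU vU; rewrite eqxx -SKcol x0 mulmx0 mxE => /eqP.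
  by rewrite eq_sym oner_eq0.
by rewrite -hx; apply: Spd.
Qed.

Definition Cs (U : {set 'I_d}) v := [set c in U | G v c].

Lemma SK_expand U K v r : prec U K -> v \in U ->
  (S *m K) r v = S r v * K v v + \sum_(c in Cs U v) S r c * K c v.
Proof.
move=> [hK _] vU; rewrite mxE (bigD1 v) //=; congr (_ + _).
rewrite [RHS]big_mkcond [LHS]big_mkcond /=; apply: eq_bigr => l _.
case: (eqVneq l v) => [->|lv] /=.
  by rewrite inE (negbTE (Girr v)) andbF.
case hC: (l \in Cs U v) => //.
case: (eqVneq (K l v) 0) => [->|hn]; first by rewrite mulr0.
have /and3P [lU _ /orP [/eqP e|Glv]] := hK _ _ hn.
  by rewrite e eqxx in lv.
by rewrite inE lU Gsym Glv in hC.
Qed.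

Definition Kstep (K : 'M[R]_d) v := \matrix_(i, j) (K i j - K i v * K v j / K v v).

Lemma prec_step U K v : prec U K -> v \in U -> simp G U v -> prec (U :\ v) (Kstep K v).
Proof.
move=> hp vU sv; have Kp := Kpos hp vU; have Kn : K v v != 0 by rewrite gt_eqF.
case: hp => hK hSK; split.
- move=> i j; rewrite mxE.
  case: (eqVneq i v) => [->|iv].
    by rewrite mulrAC divff // mul1r subrr eqxx.
  case: (eqVneq j v) => [->|jv].
    by rewrite -mulrA divff // mulr1 subrr eqxx.
  move=> hn; rewrite !inE iv jv /=.
  case: (eqVneq (K i j) 0) => hij; last first.
    by have /and3P [-> -> ->] := hK _ _ hij.
  move: hn; rewrite hij sub0r oppr_eq0 !mulf_eq0 !negb_or => /andP [/andP [hiv hvj] _].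
  have /and3P [iU _ /orP [/eqP e|Giv]] := hK _ _ hiv; first by rewrite e eqxx in iv.
  have /and3P [_ jU /orP [/eqP e|Gvj]] := hK _ _ hvj; first by rewrite e eqxx in jv.
  rewrite iU jU /=; case: (eqVneq i j) => //= nij.
  by apply: sv => //; rewrite Gsym.
- move=> i j; rewrite !inE => /andP [iv iU] /andP [jv jU].
  have -> : (S *m Kstep K v) i j = (S *m K) i j - (S *m K) i v * K v j / K v v.
    rewrite !mxE !mulr_suml -sumrB; apply: eq_bigr => l _; rewrite !mxE; ring.
  by rewrite hSK // hSK // (negbTE iv) mul0r mul0r subr0.
Qed.

Hypothesis Gch : chordal G.
Variables (alpha : R) (m : nat).
Hypothesis Sdiag : forall i, S i i = 1.
Hypothesis Sedge : forall i j, G i j -> `|S i j| <= alpha.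
Hypothesis Hclq : forall A : {set 'I_d}, is_clique G A -> (#|A| <= m.+1)%N.
Hypothesis Hm : (0 < m)%N.
Hypothesis Ha0 : 0 <= alpha.
Hypothesis Hden : 0 < 1 - (m%:R - 1) * alpha.
Definition gam := m%:R * alpha ^+ 2 / (1 - (m%:R - 1) * alpha).
Hypothesis Hgam : gam <= alpha.

Lemma cardC (U : {set 'I_d}) v : v \in U -> simp G U v -> (#|Cs U v| <= m)%N.
Proof.
move=> vU sv.
have : is_clique G (v |: Cs U v).
  apply/forallP => x; apply/implyP => xA; apply/forallP => y; apply/implyP => yA; apply/implyP => nxy.
  move: xA yA; rewrite !inE => /orP [/eqP ex|/andP [xU Gvx]] /orP [/eqP ey|/andP [yU Gvy]].
  - by rewrite ex ey eqxx in nxy.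
  - by rewrite ex.
  - by rewrite ey Gsym.
  - by apply: sv.
move/Hclq; rewrite cardsU1 inE (negbTE (Girr v)) andbF /=.
by rewrite add1n ltnS.
Qed.

Lemma step (U : {set 'I_d}) K v k : prec U K -> v \in U -> simp G U v -> k \in U -> k != v ->
  ~~ G k v -> (forall c, c \in U -> G v c -> `|S k c| <= alpha) -> `|S k v| <= gam.
Proof.
move=> hp vU sv kU kv nGkv hk.
have Kp := Kpos hp vU; have Kn : K v v != 0 by rewrite gt_eqF.
pose y c := - K c v / K v v.
have rep : forall r, r \in U -> r != v -> S r v = \sum_(c in Cs U v) S r c * y c.
  move=> r rU rv; have := SK_expand r hp vU; rewrite hp.2 // (negbTE rv) => /esym/eqP.
  rewrite addr_eq0 => /eqP e.
  have -> : S r v = (S r v * K v v) / K v v by rewrite mulfK.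
  rewrite e -sumrN mulr_suml; apply: eq_bigr => c _; rewrite /y; ring.
set C := Cs U v.
have hC : forall c, c \in C -> [/\ c \in U, c != v & G v c].
  move=> c; rewrite inE => /andP [cU Gvc]; split => //.
  by apply: contraTneq Gvc => ->; rewrite Girr.
have cardc : (#|C| <= m)%N := cardC vU sv.
pose Y : R := \big[Num.max/0]_(c in C) `|y c|.
have Y0 : 0 <= Y by apply: bigmax_ge_id.
have yle : forall c, c \in C -> `|y c| <= Y by move=> c cC; apply: le_bigmax_cond.
have aY0 : 0 <= alpha * Y by apply: mulr_ge0.
have m1 : 1 <= (m%:R : R) by rewrite ler1n.
have cm : (#|C|%:R : R) <= m%:R by rewrite ler_nat.
have yb : forall c, c \in C -> `|y c| <= alpha + (m%:R - 1) * alpha * Y.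
  move=> c cC; have [cU cv Gvc] := hC c cC.
  have := rep c cU cv; rewrite (bigD1 c cC) /= Sdiag mul1r => e.
  have -> : y c = S c v - \sum_(c' in C | c' != c) S c c' * y c' by rewrite e addrK.
  apply: le_trans (ler_normB _ _) _.
  apply: lerD; first by apply: Sedge; rewrite Gsym.
  apply: le_trans (ler_norm_sum _ _ _) _.
  apply: le_trans (_ : \sum_(c' in C | c' != c) alpha * Y <= _).
    apply: ler_sum => c' /andP [c'C c'c]; rewrite normrM; apply: ler_pM => //.
    have [c'U _ Gvc'] := hC c' c'C.
    by apply: Sedge; apply: sv => //; rewrite eq_sym.
    by apply: yle.
  have e2 : \sum_(c' in C) alpha * Y = alpha * Y + \sum_(c' in C | c' != c) alpha * Y.
    by rewrite (bigD1 c cC).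
  rewrite sumr_const -mulr_natr in e2.
  have h3 : 0 <= alpha * Y * (m%:R - #|C|%:R) by apply: mulr_ge0; rewrite // subr_ge0.
  move: e2 h3; set T := \sum_(c' in C | c' != c) alpha * Y => e2 h3.
  have -> : T = alpha * Y * #|C|%:R - alpha * Y by rewrite e2; ring.
  rewrite -subr_ge0.
  by have -> : (m%:R - 1) * alpha * Y - (alpha * Y * #|C|%:R - alpha * Y) = alpha * Y * (m%:R - #|C|%:R) by ring.
have YY : Y <= alpha + (m%:R - 1) * alpha * Y.
  apply: bigmax_le; last exact: yb.
  by apply: addr_ge0 => //; apply: mulr_ge0 => //; apply: mulr_ge0; rewrite // subr_ge0.
have Yb : Y <= alpha / (1 - (m%:R - 1) * alpha).
  rewrite ler_pdivlMr // mulrBr mulr1 lerBlDr.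
  by apply: le_trans YY _; rewrite lerD2l [X in X <= _]mulrC.
rewrite rep //.
apply: le_trans (ler_norm_sum _ _ _) _.
apply: le_trans (_ : \sum_(c in C) alpha * (alpha / (1 - (m%:R - 1) * alpha)) <= _).
  apply: ler_sum => c cC; rewrite normrM; apply: ler_pM => //.
  - have [cU _ Gvc] := hC c cC; exact: hk.
  - exact: le_trans (yle c cC) Yb.
rewrite sumr_const -(mulr_natr _ #|C|).
have -> : gam = alpha * (alpha / (1 - (m%:R - 1) * alpha)) * m%:R by rewrite /gam; ring.
apply: (ler_wpM2l _ cm); apply: mulr_ge0 => //; apply: divr_ge0 => //; exact: ltW.
Qed.

Lemma main_ind n : forall (U : {set 'I_d}) K, (#|U| <= n)%N -> prec U K ->
  forall i j, i \in U -> j \in U -> i != j -> ~~ G i j -> `|S i j| <= gam.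
Proof.
elim: n => [|n IH] U K hU hp i j iU jU ij nGij.
  by move: hU; rewrite leqn0 => /eqP /card0_eq /(_ i); rewrite iU.
have w : exists b, [/\ b \in U, b != i & ~~ G i b] by exists j; rewrite jU eq_sym ij.
have [v [vU vi nGiv sv]] := simplicial_exists Girr Gsym Gch hU iU w.
have hc : (#|U :\ v| <= n)%N by move: hU; rewrite (cardsD1 v U) vU add1n ltnS.
have IH' := IH _ _ hc (prec_step hp vU sv).
have iU' : i \in U :\ v by rewrite !inE eq_sym vi iU.
case: (eqVneq j v) => [ejv|jv]; last first.
  by apply: IH' => //; rewrite !inE jv jU.
rewrite ejv; apply: (step hp vU sv iU) => //; first by rewrite eq_sym.
move=> c cU Gvc; case: (boolP (G i c)) => Gic; first exact: Sedge.
apply: le_trans Hgam; apply: IH' => //.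
- rewrite !inE cU andbT; by apply: contraTneq Gvc => ->; rewrite Girr.
- by apply: contraTneq Gvc => <-; rewrite Gsym.
Qed.

End Analytic.

Unset Implicit Arguments.

Lemma real_facts (R : rcfType) (W sq a : R) : 1 <= W -> 1 <= sq -> 0 <= a ->
  a * (W * sq + W - 1) < 1 ->
  [/\ 0 < 1 - (W - 1) * a, W * a ^+ 2 / (1 - (W - 1) * a) <= a &
      W * a ^+ 2 / (1 - (W - 1) * a) <= W * sq * a ^+ 2 / (1 - (W - 1) * a)].
Proof.
move=> W1 sq1 a0 ha.
have h1 : 0 <= W * sq * a by apply: mulr_ge0 => //; apply: mulr_ge0; lra.
have Hden : 0 < 1 - (W - 1) * a by lra.
have h2 : 0 <= W * a * (sq - 1) by apply: mulr_ge0; [apply: mulr_ge0; lra|lra].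
have h3 : (2 * W - 1) * a <= 1 by lra.
have h4 : 0 <= a * (1 - (2 * W - 1) * a) by apply: mulr_ge0; lra.
split => //.
- rewrite ler_pdivrMr //; rewrite expr2; lra.
- apply: ler_wpM2r; first by rewrite invr_ge0; lra.
  have h5 : 0 <= W * a ^+ 2 * (sq - 1) by apply: mulr_ge0; [apply: mulr_ge0; [lra|apply: sqr_ge0]|lra].
  lra.
Qed.


Theorem theorem2 (R : rcfType) (d : nat) (G : rel 'I_d) (alpha : R) :
  simple_graph G ->
  chordal G ->
  let w : R := (chordal_treewidth G)%:R in
  w <= 2 / 3 * (d%:R - 1) ->
  alpha < 1 / (w * Num.sqrt (d%:R - w - 1) + w - 1) ->
  forall M N : 'M[R]_d,
    posdef M -> inverse_consistent M ->
    (forall i, M i i = 1) ->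
    supp M =2 G ->
    maxnorm M <= alpha ->
    inv_cons_complement M N ->
    maxnorm N <= w * Num.sqrt (d%:R - w - 1) * alpha ^+ 2 / (1 - (w - 1) * alpha).
Proof.
move=> [Girr Gsym] chG w hw halpha M N _ _ diagM suppMG maxM [symN diagN pdS suppN suppinv].
subst w; set wn := chordal_treewidth G.
move: hw halpha; rewrite -/wn => hw halpha.
have Hclq : forall A : {set 'I_d}, is_clique G A -> (#|A| <= wn.+1)%N.
  move=> A hA; have h : (#|A| <= \max_(B : {set 'I_d} | is_clique G B) #|B|)%N.
    by apply: (@leq_bigmax_cond _ _ (fun B : {set 'I_d} => #|B|)).
  rewrite /wn /chordal_treewidth; lia.
have wnd : (wn < d)%N \/ d = 0%N.
  have : (\max_(A : {set 'I_d} | is_clique G A) #|A| <= d)%N.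
    apply/bigmax_leqP => A _.
    by have := max_card (mem A); rewrite card_ord.
  rewrite /wn /chordal_treewidth; lia.
have Ha0 : 0 <= alpha.
  apply: le_trans maxM; rewrite /maxnorm; apply: bigmax_ge_id.
set sq := Num.sqrt (d%:R - wn%:R - 1).
have w0 : (0 : R) <= wn%:R by apply: ler0n.
have sq0 : 0 <= sq by apply: sqrtr_ge0.
have Dpos : 0 < wn%:R * sq + wn%:R - 1.
  rewrite ltNge; apply/negP => hD.
  have : 1 / (wn%:R * sq + wn%:R - 1) <= 0 by rewrite mul1r invr_le0.
  lra.
have Hm : (0 < wn)%N.
  case: (posnP wn) => [e|//]; move: Dpos; rewrite e mulr0n mul0r; lra.
have wd : (wn.+2 <= d)%N.
  rewrite leqNgt; apply/negP => hlt.
  have : (d%:R : R) <= (wn.+1)%:R by rewrite ler_nat; lia.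
  rewrite -addn1 natrD => hd.
  have : (1 : R) <= wn%:R by rewrite ler1n.
  lra.
have sq1 : 1 <= sq.
  rewrite /sq -{1}sqrtr1 ler_sqrt.
    have : ((wn + 2)%:R : R) <= d%:R by rewrite ler_nat; lia.
    rewrite natrD; lra.
  have : ((wn + 2)%:R : R) <= d%:R by rewrite ler_nat; lia.
  rewrite natrD; lra.
move: halpha; rewrite ltr_pdivlMr // => halpha.
have W1 : (1 : R) <= wn%:R by rewrite ler1n.
have [Hden Hgam Hfin] := @real_facts R _ _ _ W1 sq1 Ha0 halpha.
set S := M + N.
have Spd := pdS.2.
have Sdiag : forall i, S i i = 1 by move=> i; rewrite mxE diagM diagN addr0.
have hMij : forall i j, i != j -> `|M i j| <= alpha.
  move=> i j ij; apply: le_trans maxM; rewrite /maxnorm.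
  have h1 : `|M i j| <= \big[Num.max/0]_(j0 | i != j0) `|M i j0|.
    by apply: (@le_bigmax_cond _ _ _ _ j (fun j0 => i != j0) (fun j0 => `|M i j0|)).
  apply: le_trans h1 _.
  by apply: (@le_bigmax _ _ _ _ (fun i0 => \big[Num.max/0]_(j0 | i0 != j0) `|M i0 j0|) i).
have NG : forall i j, G i j -> N i j = 0.
  move=> i j Gij; have ij : i != j by apply: contraTneq Gij => ->; rewrite (negbTE (Girr j)).
  have h := suppN i j; rewrite suppMG Gij /= in h.
  case: (eqVneq (N i j) 0) => // hn.
  by have := h; rewrite /supp ij hn => /(_ isT).
have Sedge : forall i j, G i j -> `|S i j| <= alpha.
  move=> i j Gij; rewrite mxE NG // addr0; apply: hMij.
  by apply: contraTneq Gij => ->; rewrite (negbTE (Girr j)).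
have Sunit : S \in unitmx.
  rewrite unitmxE unitfE; apply/negP => /det0P [v v0 vS].
  have := Spd (v^T); rewrite trmx_eq0 v0 trmxK vS mul0mx mxE ltxx.
  by move/(_ isT).
have hprec : prec G S [set: 'I_d] (invmx S).
  split.
  - move=> i j hij; rewrite !inE /=.
    case: (eqVneq i j) => //= ij; rewrite -suppMG; apply: suppinv.
    by rewrite /supp ij hij.
  - by move=> i j _ _; rewrite mulmxV // mxE.
have hmain := main_ind Girr Gsym Spd chG Sdiag Sedge Hclq Hm Ha0 Hden Hgam (leqnn _) hprec.
have gam0 : 0 <= gam alpha wn.
  by rewrite /gam; apply: divr_ge0; [apply: mulr_ge0 => //; apply: sqr_ge0 | exact: ltW].
rewrite /maxnorm; apply: bigmax_le.
  exact: le_trans gam0 Hfin.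
move=> i _; apply: bigmax_le.
  exact: le_trans gam0 Hfin.
move=> j ij; case: (boolP (G i j)) => Gij.
  by rewrite NG // normr0; exact: le_trans gam0 Hfin.
have Mij : M i j = 0.
  by apply/eqP; have := suppMG i j; rewrite /supp ij (negbTE Gij) /= => /negbT; rewrite negbK.
have -> : N i j = S i j by rewrite mxE Mij add0r.
apply: le_trans Hfin; apply: hmain => //; by rewrite inE.
Qed.
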